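(* Let $H_0,H_1$ be complex Hilbert spaces, $G$ a densely defined closed operator from $H_0$ into $H_1$ and $D$ a densely defined closed operator from $H_1$ into $H_0$ with $-G^*\subset D$. Let $a\in\mathcal L(H_1)$ and $m\in\mathcal L(H_0)$ be coercive and let $q_0\in\mathrm{BD}(D)$. Then there exists a unique $u\in\mathrm{dom}(DaG)$ such that $mu-DaGu=0$ and $aGu-q_0\in\mathrm{dom}(\mathring D)$.
   Context: $\mathring D=-G^*$, $\mathring G=-D^*$. Domains carry graph inner products, e.g. $(q,r)_{\mathrm{dom}(D)}=(q,r)_{H_1}+(Dq,Dr)_{H_0}$. $\mathrm{BD}(D)$ is the orthogonal complement of $\mathrm{dom}(\mathring D)$ in $\mathrm{dom}(D)$. $\mathrm{dom}(DaG)=\{u\in\mathrm{dom}(G):aGu\in\mathrm{dom}(D)\}$. Coercive: $\mathrm{Re}(Mx,x)\ge\mu\|x\|^2$ for some $\mu>0$. *)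

(* Defs.v *)
From mathcomp Require Import all_boot all_algebra.
From mathcomp Require Import complex.
From mathcomp Require Import reals.
Import GRing.Theory Num.Theory.
Set Implicit Arguments. Unset Strict Implicit. Unset Printing Implicit Defensive.
Local Open Scope ring_scope.

Section Hilbert.
Variable R : realType.
Local Notation C := (R[i]).

Definition is_inner_product (V : lmodType C) (ip : V -> V -> C) : Prop :=
  [/\ (forall (a : C) (x y z : V), ip (a *: x + y) z = a * ip x z + ip y z),
      (forall x y : V, ip y x = (ip x y)^*),
      (forall x : V, 0 <= ip x x) &
      (forall x : V, ip x x = 0 -> x = 0)].

Definition hnorm (V : lmodType C) (ip : V -> V -> C) (x : V) : R :=
  Num.sqrt (complex.Re (ip x x)).

Definition hcvg (V : lmodType C) (ip : V -> V -> C) (u : nat -> V) (l : V) : Prop :=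
  forall e : R, 0 < e -> exists N : nat, forall n, (N <= n)%N -> hnorm ip (u n - l) < e.

Definition hcauchy (V : lmodType C) (ip : V -> V -> C) (u : nat -> V) : Prop :=
  forall e : R, 0 < e -> exists N : nat, forall n m, (N <= n)%N -> (N <= m)%N ->
    hnorm ip (u n - u m) < e.

Definition is_hilbert (V : lmodType C) (ip : V -> V -> C) : Prop :=
  is_inner_product ip /\
  (forall u : nat -> V, hcauchy ip u -> exists l : V, hcvg ip u l).

(* A (possibly unbounded) linear operator from V to W is given by its domain
   domA : V -> Prop and its action A : V -> W (values of A outside domA are
   irrelevant). *)
Definition is_linop (V W : lmodType C) (domA : V -> Prop) (A : V -> W) : Prop :=
  domA 0 /\
  (forall (a : C) (x y : V), domA x -> domA y ->
     domA (a *: x + y) /\ A (a *: x + y) = a *: A x + A y).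

Definition densely_defined (V : lmodType C) (ipV : V -> V -> C)
  (domA : V -> Prop) : Prop :=
  forall (x : V) (e : R), 0 < e -> exists y : V, domA y /\ hnorm ipV (x - y) < e.

Definition closed_op (V W : lmodType C) (ipV : V -> V -> C) (ipW : W -> W -> C)
  (domA : V -> Prop) (A : V -> W) : Prop :=
  forall (u : nat -> V) (x : V) (y : W),
    (forall n, domA (u n)) -> hcvg ipV u x -> hcvg ipW (A \o u) y ->
    domA x /\ A x = y.

Definition adjoint_graph (V W : lmodType C) (ipV : V -> V -> C) (ipW : W -> W -> C)
  (domA : V -> Prop) (A : V -> W) (y : W) (z : V) : Prop :=
  forall x : V, domA x -> ipW (A x) y = ipV x z.

Definition dom_adjoint (V W : lmodType C) (ipV : V -> V -> C) (ipW : W -> W -> C)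
  (domA : V -> Prop) (A : V -> W) (y : W) : Prop :=
  exists z : V, adjoint_graph ipV ipW domA A y z.

Definition bounded (V : lmodType C) (ipV : V -> V -> C) (a : V -> V) : Prop :=
  exists c : R, forall x : V, hnorm ipV (a x) <= c * hnorm ipV x.

Definition coercive (V : lmodType C) (ipV : V -> V -> C) (a : V -> V) : Prop :=
  exists mu : R, 0 < mu /\
    forall x : V, mu * hnorm ipV x ^+ 2 <= complex.Re (ipV (a x) x).

End Hilbert.

(* Main.v *)
Require Import Defs.
From mathcomp Require Import all_boot all_order all_algebra.
From mathcomp Require Import complex.
From mathcomp Require Import reals.
From mathcomp Require Import ring lra zify.
From mathcomp Require Import boolp classical_sets.
Import Order.TTheory GRing.Theory Num.Theory.
Local Open Scope complex_scope.
Local Open Scope ring_scope.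
Section CHelp.
Context {R : realType}.
Implicit Types z w : R[i].
Lemma ReD z w : complex.Re (z + w) = complex.Re z + complex.Re w.
Proof. by case: z => a b; case: w => c d. Qed.
Lemma ImD z w : complex.Im (z + w) = complex.Im z + complex.Im w.
Proof. by case: z => a b; case: w => c d. Qed.
Lemma ReN z : complex.Re (- z) = - complex.Re z.
Proof. by case: z. Qed.
Lemma ReJ z : complex.Re (z^*) = complex.Re z.
Proof. by case: z. Qed.
Lemma ImJ z : complex.Im (z^*) = - complex.Im z.
Proof. by case: z. Qed.
Lemma ReM z w : complex.Re (z * w) = complex.Re z * complex.Re w - complex.Im z * complex.Im w.
Proof. by case: z => a b; case: w => c d. Qed.
Lemma ImM z w : complex.Im (z * w) = complex.Re z * complex.Im w + complex.Im z * complex.Re w.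
Proof. by case: z => a b; case: w => c d. Qed.
Lemma ReRM (c : R) z : complex.Re (c%:C * z) = c * complex.Re z.
Proof. case: z => a b /=. ring. Qed.
Lemma ReiJ z : complex.Re (('i)^* * z) = complex.Im z.
Proof. case: z => a b /=. ring. Qed.
Lemma ImiJ z : complex.Im (('i)^* * z) = - complex.Re z.
Proof. case: z => a b /=. ring. Qed.
Lemma complex_ext z w : complex.Re z = complex.Re w -> complex.Im z = complex.Im w -> z = w.
Proof. by case: z => a b; case: w => c d /= -> ->. Qed.
Lemma conjR (c : R) : (c%:C)^* = c%:C :> R[i].
Proof. apply: complex_ext; rewrite ?ReJ ?ImJ //= oppr0. by []. Qed.
Lemma ge0_complex (z : R[i]) : 0 <= z -> complex.Im z = 0 /\ 0 <= complex.Re z.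
Proof. case: z => a b; rewrite lecE /= => /andP[/eqP <- ->]. by []. Qed.
Lemma conjJ z : (z^*)^* = z.
Proof. apply: complex_ext; by rewrite ?ReJ ?ImJ ?opprK. Qed.
Lemma conjD z w : (z + w)^* = z^* + w^*.
Proof. by rewrite rmorphD. Qed.
Lemma conjM z w : (z * w)^* = z^* * w^*.
Proof. by rewrite rmorphM. Qed.
End CHelp.
Arguments ge0_complex {R z}.
Section Real.
Context {R : realType}.
Lemma small_inv (e : R) : 0 < e -> exists N : nat, forall n, (N <= n)%N -> (n.+1%:R)^-1 < e.
Proof.
move=> e0; exists (Num.Def.archi_bound (e^-1)) => n hn.
have e1 : 0 <= e^-1 by rewrite invr_ge0 ltW.
have h1 := archi_boundP e1.
have h2 : (Num.Def.archi_bound e^-1)%:R <= n%:R :> R by rewrite ler_nat.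
have h3 : n%:R < n.+1%:R :> R by rewrite ltr_nat.
rewrite invf_plt ?posrE ?ltr0Sn //. lra.
Qed.

Lemma quad0 (c q : R) : 0 <= q -> (forall t, 0 <= c * t + q * t ^+ 2) -> c = 0.
Proof.
move=> q0 h; set s := q + 1.
have s0 : 0 < s by rewrite /s; lra.
have ts : (- c / s) * s = - c by rewrite mulfVK // gt_eqF.
have := h (- c / s); set t := - c / s => ht.
have : 0 <= (c * t + q * t ^+ 2) * s ^+ 2 by rewrite mulr_ge0 // sqr_ge0.
have -> : (c * t + q * t ^+ 2) * s ^+ 2 = c * (t * s) * s + q * (t * s) ^+ 2 by ring.
rewrite ts /s => h'. 
have : c ^+ 2 <= 0 by nra.
by move=> hc; apply/eqP; rewrite -sqrf_eq0 eq_le hc sqr_ge0.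
Qed.
End Real.

Section IP.
Context {R : realType}.
Context {V : lmodType R[i]}.
Variable ip : V -> V -> R[i].
Hypothesis Hip : is_inner_product ip.

Definition n2 (x : V) : R := complex.Re (ip x x).
Definition rp (x y : V) : R := complex.Re (ip x y).

Lemma ipL a x y z : ip (a *: x + y) z = a * ip x z + ip y z.
Proof. by case: Hip. Qed.
Lemma ipC x y : ip y x = (ip x y)^*.
Proof. by case: Hip. Qed.
Lemma ip_ge0 x : 0 <= ip x x.
Proof. by case: Hip. Qed.
Lemma ip_eq0 x : ip x x = 0 -> x = 0.
Proof. by case: Hip => _ _ _; apply. Qed.

Lemma ip0l z : ip 0 z = 0.
Proof.
have := ipL 1 0 0 z. rewrite scaler0 addr0 mul1r => h.
by apply: (addrI (ip 0 z)); rewrite addr0 -h.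
Qed.
Lemma ipDl x y z : ip (x + y) z = ip x z + ip y z.
Proof. by rewrite -[x]scale1r ipL mul1r scale1r. Qed.
Lemma ipZl a x z : ip (a *: x) z = a * ip x z.
Proof. by rewrite -[a *: x]addr0 ipL ip0l addr0. Qed.
Lemma ipNl x z : ip (- x) z = - ip x z.
Proof. by rewrite -scaleN1r ipZl mulN1r. Qed.
Lemma ipBl x y z : ip (x - y) z = ip x z - ip y z.
Proof. by rewrite ipDl ipNl. Qed.
Lemma ip0r z : ip z 0 = 0.
Proof. by rewrite ipC ip0l rmorph0. Qed.
Lemma ipDr x y z : ip z (x + y) = ip z x + ip z y.
Proof. by rewrite ipC ipDl conjD -!ipC. Qed.
Lemma ipZr a x z : ip z (a *: x) = a^* * ip z x.
Proof. by rewrite ipC ipZl conjM -ipC. Qed.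
Lemma ipNr x z : ip z (- x) = - ip z x.
Proof. by rewrite -scaleN1r ipZr rmorphN1 mulN1r. Qed.
Lemma ipBr x y z : ip z (x - y) = ip z x - ip z y.
Proof. by rewrite ipDr ipNr. Qed.

Lemma n2_ge0 x : 0 <= n2 x.
Proof. by case: (ge0_complex (ip_ge0 x)). Qed.
Lemma Im_ipxx x : complex.Im (ip x x) = 0.
Proof. by case: (ge0_complex (ip_ge0 x)). Qed.
Lemma n2_eq0 x : n2 x = 0 -> x = 0.
Proof.
move=> h; apply: ip_eq0; apply: complex_ext; first by rewrite -/(n2 x) h.
by rewrite Im_ipxx.
Qed.
Lemma rpC x y : rp y x = rp x y.
Proof. by rewrite /rp ipC ReJ. Qed.
Lemma n2D x y : n2 (x + y) = n2 x + 2 * rp x y + n2 y.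
Proof.
rewrite /n2 /rp ipDl !ipDr !ReD -/(rp y x) rpC /rp. ring.
Qed.
Lemma n2N x : n2 (- x) = n2 x.
Proof. by rewrite /n2 ipNl ipNr opprK. Qed.
Lemma rpNr x y : rp x (- y) = - rp x y.
Proof. by rewrite /rp ipNr ReN. Qed.
Lemma n2B x y : n2 (x - y) = n2 x - 2 * rp x y + n2 y.
Proof. by rewrite n2D rpNr n2N; ring. Qed.
Lemma rpZl (c : R) x y : rp (c%:C *: x) y = c * rp x y.
Proof. by rewrite /rp ipZl ReRM. Qed.
Lemma rpZr (c : R) x y : rp x (c%:C *: y) = c * rp x y.
Proof. by rewrite /rp ipZr conjR ReRM. Qed.
Lemma n2Z (c : R) x : n2 (c%:C *: x) = c ^+ 2 * n2 x.
Proof. rewrite /n2 -/(rp _ _) rpZl rpZr /rp. ring. Qed.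
Lemma rpDr x y z : rp x (y + z) = rp x y + rp x z.
Proof. by rewrite /rp ipDr ReD. Qed.
Lemma rpDl x y z : rp (x + y) z = rp x z + rp y z.
Proof. by rewrite /rp ipDl ReD. Qed.
Lemma rpBl x y z : rp (x - y) z = rp x z - rp y z.
Proof. by rewrite /rp ipBl ReD ReN. Qed.
Lemma rpBr x y z : rp x (y - z) = rp x y - rp x z.
Proof. by rewrite /rp ipBr ReD ReN. Qed.

Local Notation nm := (hnorm ip).
Lemma nm_ge0 x : 0 <= nm x.
Proof. exact: sqrtr_ge0. Qed.
Lemma nm_sq x : nm x ^+ 2 = n2 x.
Proof. by rewrite /hnorm sqr_sqrtr // n2_ge0. Qed.
Lemma nm_eq0 x : nm x = 0 -> x = 0.
Proof. move=> h; apply: n2_eq0; by rewrite -nm_sq h expr0n. Qed.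
Lemma nm0 : nm 0 = 0.
Proof. by rewrite /hnorm /n2 ip0l /= sqrtr0. Qed.

Lemma CS x y : rp x y <= nm x * nm y.
Proof.
set a := nm x; set b := nm y.
have ha : 0 <= a by apply: nm_ge0.
have hb : 0 <= b by apply: nm_ge0.
have h := n2_ge0 (b%:C *: x - a%:C *: y).
rewrite n2B n2Z n2Z rpZl rpZr -!nm_sq -/a -/b in h.
have [a0|apos] := eqVneq a 0.
  have -> : x = 0 by apply: nm_eq0.
  by rewrite /rp ip0l /= a0 mul0r.
have [b0|bpos] := eqVneq b 0.
  have -> : y = 0 by apply: nm_eq0.
  by rewrite /rp ip0r /= b0 mulr0.
have hab : 0 < a * b by rewrite mulr_gt0 // lt0r ?apos ?bpos.
have : a * b * rp x y <= a * b * (a * b) by nra.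
by rewrite ler_pM2l.
Qed.

Lemma nm_triangle x y : nm (x + y) <= nm x + nm y.
Proof.
have h1 := nm_ge0 (x + y); have h2 := nm_ge0 x; have h3 := nm_ge0 y.
rewrite -(ler_pXn2r (_ : 0 < 2)%N) ?nnegrE ?addr_ge0 //.
rewrite nm_sq n2D -!nm_sq. have := CS x y. nra.
Qed.
Lemma nmN x : nm (- x) = nm x.
Proof. by have := n2N x; rewrite /hnorm /n2 => ->. Qed.
Lemma nmZ (c : R) x : nm (c%:C *: x) = `|c| * nm x.
Proof. by have := n2Z c x; rewrite /hnorm /n2 => ->; rewrite sqrtrM ?sqrtr_sqr // sqr_ge0. Qed.
Lemma nmB_sym x y : nm (x - y) = nm (y - x).
Proof. by rewrite -(nmN (y - x)) opprB. Qed.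

Lemma ip_unique x y : (forall v, ip x v = ip y v) -> x = y.
Proof.
move=> h; apply/eqP; rewrite -subr_eq0; apply/eqP; apply: ip_eq0.
by rewrite ipBl h subrr.
Qed.


Lemma n2_lt x (e : R) : 0 < e -> n2 x < e ^+ 2 -> nm x < e.
Proof.
move=> e0 h; rewrite ltNge; apply/negP => he.
have := nm_sq x; have := nm_ge0 x. nra.
Qed.

Lemma nm_small_eq0 x : (forall e : R, 0 < e -> nm x < e) -> x = 0.
Proof.
move=> h; apply: nm_eq0; apply/eqP; rewrite eq_le nm_ge0 andbT.
apply/ler_addgt0Pr => e e0; rewrite add0r; exact: ltW (h e e0).
Qed.

Lemma cvg_cauchy u l : hcvg ip u l -> hcauchy ip u.
Proof.
move=> h e e0; have e2 : 0 < e / 2 by rewrite divr_gt0.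
have [N hN] := h _ e2; exists N => n m hn hm.
have := nm_triangle (u n - l) (l - u m).
rewrite addrA subrK (nmB_sym l) => h1.
have := hN _ hn; have := hN _ hm. lra.
Qed.

Definition subspace (S : V -> Prop) :=
  S 0 /\ (forall a x y, S x -> S y -> S (a *: x + y)).
Definition closedS (S : V -> Prop) :=
  forall u l, (forall n, S (u n)) -> hcvg ip u l -> S l.
Definition complete := forall u, hcauchy ip u -> exists l, hcvg ip u l.
Definition antilin (S : V -> Prop) (g : V -> R[i]) :=
  forall a x y, S x -> S y -> g (a *: x + y) = a^* * g x + g y.

Section Sub.
Variable S : V -> Prop.
Hypothesis HS : subspace S.
Lemma S0 : S 0. Proof. by case: HS. Qed.
Lemma SL a x y : S x -> S y -> S (a *: x + y). Proof. by case: HS => _; apply. Qed.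
Lemma SZ a x : S x -> S (a *: x).
Proof. by move=> Sx; rewrite -[a *: x]addr0; apply: SL => //; apply: S0. Qed.
Lemma SD x y : S x -> S y -> S (x + y).
Proof. by move=> Sx Sy; rewrite -[x]scale1r; apply: SL. Qed.
Lemma SN x : S x -> S (- x).
Proof. by move=> Sx; rewrite -scaleN1r; apply: SZ. Qed.
Lemma SB x y : S x -> S y -> S (x - y).
Proof. by move=> Sx Sy; apply: SD => //; apply: SN. Qed.

Variable g : V -> R[i].
Hypothesis Hg : antilin S g.
Lemma g0 : g 0 = 0.
Proof.
have := Hg 1 0 0 S0 S0; rewrite scale1r addr0 rmorph1 mul1r => h.
by apply: (addrI (g 0)); rewrite addr0 -h.
Qed.
Lemma gZ a x : S x -> g (a *: x) = a^* * g x.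
Proof. move=> Sx; rewrite -[a *: x]addr0 Hg //; last exact: S0. by rewrite g0 addr0. Qed.
Lemma gD x y : S x -> S y -> g (x + y) = g x + g y.
Proof. by move=> Sx Sy; rewrite -[x]scale1r Hg // rmorph1 mul1r scale1r. Qed.
Lemma gN x : S x -> g (- x) = - g x.
Proof. by move=> Sx; rewrite -scaleN1r gZ // rmorphN1 mulN1r. Qed.
Lemma RegZ (c : R) x : S x -> complex.Re (g (c%:C *: x)) = c * complex.Re (g x).
Proof. by move=> Sx; rewrite gZ // conjR ReRM. Qed.
End Sub.
Arguments S0 {S}. Arguments SL {S}. Arguments SZ {S}. Arguments SD {S}.
Arguments SN {S}. Arguments SB {S}.
Arguments g0 {S} _ {g}. Arguments gZ {S} _ {g}. Arguments gD {S g}.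
Arguments gN {S} _ {g}. Arguments RegZ {S} _ {g}.

Lemma riesz S g K : subspace S -> closedS S -> complete -> antilin S g ->
  (forall v, S v -> complex.Re (g v) <= K * nm v) ->
  exists w, S w /\ forall v, S v -> ip w v = g v.
Proof.
move=> HS HSc Hc Hg HK.
pose J v := n2 v - 2 * complex.Re (g v).
have Jlb : forall v, S v -> - K ^+ 2 <= J v.
  move=> v Sv; have := HK v Sv; have := nm_sq v; have := nm_ge0 v.
  have := sqr_ge0 (nm v - K); rewrite /J; nra.
pose E := fun r : R => exists v, S v /\ r = J v.
have hlb : has_lbound E.
  by exists (- K ^+ 2) => r [v [Sv ->]]; apply: Jlb.
have hinf : has_inf E.
  by split => //; exists (J 0); exists 0; split => //; apply: (S0 HS).
pose d := inf E.
have dle : forall v, S v -> d <= J v.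
  by move=> v Sv; apply: (ge_inf hlb); exists v.
have hseq : forall n : nat, exists v, S v /\ J v < d + (n.+1%:R)^-1.
  move=> n; have e0 : 0 < (n.+1%:R : R)^-1 by rewrite invr_gt0 ltr0Sn.
  have [r [v [Sv ->]] hr] := inf_adherent e0 hinf.
  by exists v.
case: (choice hseq) => vs Hvs.
have key : forall n m, n2 (vs n - vs m) <= 2 * J (vs n) + 2 * J (vs m) - 4 * d.
  move=> n m; set x := vs n; set y := vs m.
  have Sx : S x by case: (Hvs n).
  have Sy : S y by case: (Hvs m).
  have Smid : S ((2^-1)%:C *: (x + y)) by apply: (SZ HS) => //; apply: (SD HS).
  have := dle _ Smid; rewrite /J n2Z (RegZ HS Hg) //; last by apply: (SD HS).
  rewrite n2D n2B (gD Hg) // ReD expr2 => h.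
  have h2 : (2^-1 : R) * 2^-1 = 4^-1 by field.
  rewrite h2 in h.
  have h4 : (4^-1 : R) * 4 = 1 by field.
  nra.
have hcau : hcauchy ip vs.
  move=> e e0.
  have e2 : 0 < e ^+ 2 / 4 by rewrite divr_gt0 // exprn_gt0.
  have [N hN] := small_inv _ e2.
  exists N => n m hn hm; apply: n2_lt => //.
  have k1 := key n m; have k2 := hN _ hn; have k3 := hN _ hm.
  case: (Hvs n) => _ h1; case: (Hvs m) => _ h2.
  have h4 : e ^+ 2 / 4 * 4 = e ^+ 2 by field.
  move: k1 k2 k3 h1 h2 h4.
  move: (n.+1%:R^-1 : R) (m.+1%:R^-1 : R) (J (vs n)) (J (vs m)) (n2 (vs n - vs m)) (e ^+ 2) => a b c c' f E2.
  move=> k1 k2 k3 h1 h2 h4. lra.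
have [w hw] := Hc _ hcau.
have Sw : S w by apply: (HSc vs) => // n; case: (Hvs n).
have Jw : J w <= d.
  apply/ler_addgt0Pr => eps eps0.
  set Q := 2 * nm w + 3 + 2 * `|K|.
  have Q0 : 0 < Q by have := nm_ge0 w; have := normr_ge0 K; rewrite /Q; lra.
  have [N1 hN1] := hw 1 ltr01.
  have eQ : 0 < eps / (2 * Q) by rewrite divr_gt0 // mulr_gt0.
  have [N2 hN2] := hw _ eQ.
  have eps2 : 0 < eps / 2 by rewrite divr_gt0.
  have [N3 hN3] := small_inv _ eps2.
  set n := (N1 + N2 + N3)%N.
  have t1 := hN1 n (leq_trans (leq_addr N2 N1) (leq_addr N3 _)).
  have t2 := hN2 n (leq_trans (leq_addl N1 N2) (leq_addr N3 _)).
  have t3 := hN3 n (leq_addl _ _).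
  set x := vs n in t1 t2 *.
  have Sx : S x by case: (Hvs n).
  have Jx : J x < d + eps / 2.
    case: (Hvs n) => _ h; rewrite -/x in h; move: t3 h; move: (n.+1%:R^-1 : R) => r t3 h; lra.
  set del := x - w in t1 t2.
  have Sdel : S del by apply: (SB HS).
  have wE : w = x - del by rewrite /del opprB addrC subrK.
  have JwE : J w = J x - 2 * rp x del + n2 del + 2 * complex.Re (g del).
    rewrite /J wE n2B -[x - del]addrC (gD Hg) ?(gN HS Hg) ?ReD ?ReN //; first by ring.
    by apply: (SN HS).
  have hrp : - rp x del <= nm x * nm del.
    by rewrite -rpNr; apply: (le_trans (CS _ _)); rewrite nmN.
  have hx : nm x <= nm w + nm del.
    by have := nm_triangle w del; rewrite /del addrC subrK.
  have hgd : complex.Re (g del) <= `|K| * nm del.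
    apply: (le_trans (HK _ Sdel)); apply: ler_wpM2r; [exact: nm_ge0| exact: ler_norm].
  have hQ : nm del * Q < eps / 2.
    have -> : eps / 2 = eps / (2 * Q) * Q by field; rewrite gt_eqF.
    by rewrite ltr_pM2r.
  have := nm_sq del; have := nm_ge0 del; have := nm_ge0 x; have := nm_ge0 w.
  have := normr_ge0 K. rewrite /Q in hQ. nra.
have var : forall v, S v -> rp w v = complex.Re (g v).
  move=> v Sv.
  have : forall t : R, 0 <= 2 * (rp w v - complex.Re (g v)) * t + n2 v * t ^+ 2.
    move=> t.
    have Stv : S (t%:C *: v) by apply: (SZ HS).
    have := dle _ (SD HS _ _ Sw Stv).
    rewrite /J n2D n2Z rpZr (gD Hg) // ReD (RegZ HS Hg) // => h.
    move: Jw; rewrite /J; nra.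
  by move/(quad0 _ _ (n2_ge0 v)) => /eqP; rewrite mulf_eq0 subr_eq0 pnatr_eq0 /= => /eqP.
exists w; split => // v Sv; apply: complex_ext; first by apply: var.
have Siv : S ('i *: v) by apply: (SZ HS).
have := var _ Siv; rewrite /rp ipZr ReiJ (gZ HS Hg) // ReiJ. by [].
Qed.

Lemma lax_milgram S B f M alpha Kf : subspace S -> closedS S -> complete ->
  (forall u, S u -> antilin S (B u)) ->
  (forall v a x y, S v -> S x -> S y -> B (a *: x + y) v = a * B x v + B y v) ->
  (forall u v, S u -> S v -> complex.Re (B u v) <= M * nm u * nm v) ->
  0 < alpha -> (forall u, S u -> alpha * n2 u <= complex.Re (B u u)) ->
  antilin S f -> (forall v, S v -> complex.Re (f v) <= Kf * nm v) ->
  exists u, S u /\ forall v, S v -> B u v = f v.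
Proof.
move=> HS HSc Hc HB1 HB2 HBb a0 Hco Hf HfK.
have hA : forall u, exists w, S u -> S w /\ forall v, S v -> ip w v = B u v.
  move=> u; case: (EM (S u)) => [Su|nSu]; last by exists 0.
  have [w hw] := @riesz S (B u) (M * nm u) HS HSc Hc (HB1 u Su) (fun v Sv => HBb u v Su Sv).
  by exists w.
case: (choice hA) => A HA.
have SA : forall u, S u -> S (A u) by move=> u Su; case: (HA u Su).
have ipA : forall u v, S u -> S v -> ip (A u) v = B u v.
  by move=> u v Su Sv; case: (HA u Su) => _; apply.
have Auniq : forall x y, S x -> S y -> (forall v, S v -> ip x v = ip y v) -> x = y.
  move=> x y Sx Sy h; apply/eqP; rewrite -subr_eq0; apply/eqP; apply: ip_eq0.
  by rewrite ipBl h ?subrr //; apply: (SB HS).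
have Alin : forall a x y, S x -> S y -> A (a *: x + y) = a *: A x + A y.
  move=> a x y Sx Sy; apply: Auniq.
  - by apply: SA; apply: (SL HS).
  - by apply: (SL HS); apply: SA.
  move=> v Sv; rewrite ipL !ipA //; last by apply: (SL HS).
  by rewrite HB2.
have Ab : forall u, S u -> nm (A u) <= `|M| * nm u.
  move=> u Su.
  have h : n2 (A u) <= `|M| * nm u * nm (A u).
    rewrite /n2 -/(rp _ _) /rp ipA //; last by apply: SA.
    apply: (le_trans (HBb _ _ Su (SA _ Su))).
    apply: ler_wpM2r; first exact: nm_ge0.
    apply: ler_wpM2r; first exact: nm_ge0.
    exact: ler_norm.
  have c0 : 0 <= `|M| * nm u by rewrite mulr_ge0 // nm_ge0.
  move: h c0; rewrite -nm_sq; move: (`|M| * nm u) (nm (A u)) (nm_ge0 (A u)) => c t t0 h c0.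
  nra.
have Ac : forall u, S u -> alpha * nm u <= nm (A u).
  move=> u Su.
  have h : alpha * n2 u <= nm (A u) * nm u.
    apply: (le_trans (Hco _ Su)); rewrite -ipA //; exact: CS.
  move: h; rewrite -nm_sq; move: (nm u) (nm (A u)) (nm_ge0 u) (nm_ge0 (A u)) => t c t0 c0 h.
  nra.
have A0 : A 0 = 0.
  have := Alin 1 0 0 (S0 HS) (S0 HS); rewrite scaler0 addr0 scale1r => h.
  by apply: (addrI (A 0)); rewrite addr0 -h.
have AB : forall x y, S x -> S y -> A (x - y) = A x - A y.
  move=> x y Sx Sy; rewrite addrC -scaleN1r Alin ?scaleN1r 1?addrC //.
pose Y := fun y => exists u, S u /\ y = A u.
have HY : subspace Y.
  split; first by exists 0; split; [exact: (S0 HS) | by rewrite A0].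
  move=> a y1 y2 [u1 [Su1 ->]] [u2 [Su2 ->]].
  by exists (a *: u1 + u2); split; [apply: (SL HS) | rewrite Alin].
have HYc : closedS Y.
  move=> ys l hys hl.
  have hu : forall n, exists u, S u /\ ys n = A u by move=> n; exact: (hys n).
  case: (choice hu) => us Hus.
  have Sus : forall n, S (us n) by move=> n; case: (Hus n).
  have hcau : hcauchy ip us.
    move=> e e0; have ea : 0 < e * alpha by rewrite mulr_gt0.
    have [N hN] := cvg_cauchy _ _ hl _ ea.
    exists N => n m hn hm.
    have := hN n m hn hm; case: (Hus n) => _ ->; case: (Hus m) => _ ->.
    rewrite -AB // => h1.
    have := Ac _ (SB HS _ _ (Sus n) (Sus m)).
    have := nm_ge0 (us n - us m). nra.
  have [u hu'] := Hc _ hcau.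
  have Su : S u by apply: (HSc us).
  exists u; split => //.
  apply/eqP; rewrite -subr_eq0; apply/eqP; apply: nm_small_eq0 => e e0.
  have e2 : 0 < e / 2 by rewrite divr_gt0.
  have M1 : 0 < 2 * (`|M| + 1) by have := normr_ge0 M; lra.
  have e3 : 0 < e / (2 * (`|M| + 1)) by rewrite divr_gt0.
  have [N1 hN1] := hl _ e2.
  have [N2 hN2] := hu' _ e3.
  set n := (N1 + N2)%N.
  have t1 := hN1 n (leq_addr _ _).
  have t2 := hN2 n (leq_addl _ _).
  case: (Hus n) => _ hyn; rewrite hyn in t1.
  have t3 := Ab _ (SB HS _ _ (Sus n) Su); rewrite AB // in t3.
  have := nm_triangle (l - A (us n)) (A (us n) - A u).
  rewrite addrA subrK (nmB_sym l (A u)) (nmB_sym l (A (us n))) => t4.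
  have t5 : `|M| * nm (us n - u) <= e / 2.
    have -> : e / 2 = (`|M| + 1) * (e / (2 * (`|M| + 1))) by field; rewrite gt_eqF //; lra.
    have := nm_ge0 (us n - u); have := normr_ge0 M; nra.
  lra.
have [F [SF hF]] := @riesz S f Kf HS HSc Hc Hf HfK.
pose g := fun v => ip F v.
have Hg : antilin Y g by move=> a x y _ _; rewrite /g ipDr ipZr.
have [p [[u0 [Su0 ->]] hp]] := @riesz Y g (nm F) HY HYc Hc Hg (fun v _ => CS F v).
have Sr : S (F - A u0) by apply: (SB HS) => //; apply: SA.
have hr : forall w, S w -> ip (F - A u0) (A w) = 0.
  move=> w Sw; rewrite ipBl hp ?subrr //; by exists w.
have r0 : F - A u0 = 0.
  apply: n2_eq0; apply/eqP; rewrite eq_le n2_ge0 andbT.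
  have := Hco _ Sr; rewrite -ipA // ipC hr // ReJ /=.
  move=> h; rewrite -(@pmulr_rle0 _ alpha) //.
move: r0 => /eqP; rewrite subr_eq0 => /eqP FA.
exists u0; split => // v Sv; rewrite -ipA // -FA; exact: hF.
Qed.

End IP.
Arguments ipL {R V ip}.
Arguments ipC {R V ip}.
Arguments ip_ge0 {R V ip}.
Arguments ip_eq0 {R V ip}.
Arguments ip0l {R V ip}.
Arguments ipDl {R V ip}.
Arguments ipZl {R V ip}.
Arguments ipNl {R V ip}.
Arguments ipBl {R V ip}.
Arguments ip0r {R V ip}.
Arguments ipDr {R V ip}.
Arguments ipZr {R V ip}.
Arguments ipNr {R V ip}.
Arguments ipBr {R V ip}.
Arguments n2_ge0 {R V ip}.
Arguments Im_ipxx {R V ip}.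
Arguments n2_eq0 {R V ip}.
Arguments rpC {R V ip}.
Arguments n2D {R V ip}.
Arguments n2N {R V ip}.
Arguments rpNr {R V ip}.
Arguments n2B {R V ip}.
Arguments rpZl {R V ip}.
Arguments rpZr {R V ip}.
Arguments n2Z {R V ip}.
Arguments rpDr {R V ip}.
Arguments rpDl {R V ip}.
Arguments rpBl {R V ip}.
Arguments rpBr {R V ip}.
Arguments nm_sq {R V ip}.
Arguments nm_eq0 {R V ip}.
Arguments nm0 {R V ip}.
Arguments CS {R V ip}.
Arguments nm_triangle {R V ip}.
Arguments nmN {R V ip}.
Arguments nmZ {R V ip}.
Arguments nmB_sym {R V ip}.
Arguments ip_unique {R V ip}.
Arguments n2_lt {R V ip}.
Arguments nm_small_eq0 {R V ip}.
Arguments cvg_cauchy {R V ip}.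
Arguments riesz {R V ip}.
Arguments lax_milgram {R V ip}.

Section Prod.
Context {R : realType} {V0 V1 : lmodType R[i]}.
Variables (ip0 : V0 -> V0 -> R[i]) (ip1 : V1 -> V1 -> R[i]).
Hypotheses (H0 : is_inner_product ip0) (H1 : is_inner_product ip1).

Definition ipP (p q : (V0 * V1)%type) : R[i] := ip0 p.1 q.1 + ip1 p.2 q.2.

Lemma ipP_inner : is_inner_product ipP.
Proof.
split.
- move=> c x y z; rewrite /ipP /= (ipL H0) (ipL H1); ring.
- by move=> x y; rewrite /ipP (ipC H0) (ipC H1) conjD.
- by move=> x; rewrite /ipP addr_ge0 // ip_ge0.
- case=> x1 x2; rewrite /ipP /= => /eqP; rewrite paddr_eq0 ?ip_ge0 //.
  by case/andP => /eqP /(ip_eq0 H0) -> /eqP /(ip_eq0 H1) ->.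
Qed.

Lemma n2P p : n2 ipP p = n2 ip0 p.1 + n2 ip1 p.2.
Proof. by rewrite /n2 /ipP ReD. Qed.

Lemma nmP1 p : hnorm ip0 p.1 <= hnorm ipP p.
Proof.
rewrite /hnorm ler_sqrt; last exact: (n2_ge0 ipP_inner p).
by have := n2_ge0 H1 p.2; rewrite -!/(n2 _ _) n2P; lra.
Qed.
Lemma nmP2 p : hnorm ip1 p.2 <= hnorm ipP p.
Proof.
rewrite /hnorm ler_sqrt; last exact: (n2_ge0 ipP_inner p).
by have := n2_ge0 H0 p.1; rewrite -!/(n2 _ _) n2P; lra.
Qed.
Lemma nmP_le p : hnorm ipP p <= hnorm ip0 p.1 + hnorm ip1 p.2.
Proof.
have a0 := nm_ge0 ip0 p.1; have b0 := nm_ge0 ip1 p.2; have c0 := nm_ge0 ipP p.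
rewrite -(ler_pXn2r (_ : 0 < 2)%N) ?nnegrE ?addr_ge0 //.
rewrite (nm_sq ipP_inner) n2P -(nm_sq H0) -(nm_sq H1). nra.
Qed.

Lemma prod_complete : complete ip0 -> complete ip1 -> complete ipP.
Proof.
move=> c0 c1 u hu.
have hu1 : hcauchy ip0 (fun n => (u n).1).
  move=> e e0; have [N hN] := hu e e0; exists N => n m hn hm.
  exact: le_lt_trans (nmP1 (u n - u m)) (hN n m hn hm).
have hu2 : hcauchy ip1 (fun n => (u n).2).
  move=> e e0; have [N hN] := hu e e0; exists N => n m hn hm.
  exact: le_lt_trans (nmP2 (u n - u m)) (hN n m hn hm).
have [l1 hl1] := c0 _ hu1; have [l2 hl2] := c1 _ hu2.
exists (l1, l2) => e e0.
have e2 : 0 < e / 2 by rewrite divr_gt0.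
have [N1 hN1] := hl1 _ e2; have [N2 hN2] := hl2 _ e2.
exists (N1 + N2)%N => n hn.
have t1 := hN1 n (leq_trans (leq_addr _ _) hn).
have t2 := hN2 n (leq_trans (leq_addl _ _) hn).
have := nmP_le (u n - (l1, l2)). simpl. lra.
Qed.

End Prod.
Arguments ipP_inner {R V0 V1 ip0 ip1}.
Arguments n2P {R V0 V1 ip0 ip1}.
Arguments nmP1 {R V0 V1 ip0 ip1}.
Arguments nmP2 {R V0 V1 ip0 ip1}.
Arguments nmP_le {R V0 V1 ip0 ip1}.
Arguments prod_complete {R V0 V1 ip0 ip1}.

Section Misc.
Context {R : realType}.
Lemma bnd (r A x y P Q c : R) : r <= A * y -> A <= c * x -> x <= P -> y <= Q ->
  0 <= x -> 0 <= y -> 0 <= c -> r <= c * (P * Q).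
Proof.
move=> h1 h2 h3 h4 x0 y0 c0.
apply: (le_trans h1); apply: (le_trans (ler_wpM2r y0 h2)).
rewrite -mulrA; apply: ler_wpM2l => //.
by apply: ler_pM.
Qed.
Lemma eqlem (T : comNzRingType) (A X Z Y : T) : A + X = Z + Y -> X - Y = Z - A.
Proof. move=> h; rewrite -[X](addKr A) h; ring. Qed.
Lemma subsub (T : zmodType) (D x y : T) : (D - x) - (D - y) = y - x.
Proof. by rewrite opprB addrC addrA subrK. Qed.
Lemma subsub2 (T : zmodType) (x y q : T) : (x - q) - (y - q) = x - y.
Proof. by rewrite opprB addrA subrK. Qed.
End Misc.

Close Scope complex_scope.

Theorem proposition2p15 (R : realType)
  (V0 V1 : lmodType R[i]) (ip0 : V0 -> V0 -> R[i]) (ip1 : V1 -> V1 -> R[i])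
  (H0hilb : is_hilbert ip0) (H1hilb : is_hilbert ip1)
  (domG : V0 -> Prop) (G : V0 -> V1)
  (Glin : is_linop domG G) (Gdense : densely_defined ip0 domG)
  (Gclosed : closed_op ip0 ip1 domG G)
  (domD : V1 -> Prop) (D : V1 -> V0)
  (Dlin : is_linop domD D) (Ddense : densely_defined ip1 domD)
  (Dclosed : closed_op ip1 ip0 domD D)
  (* - adjoint(G) is a restriction of D *)
  (hGD : forall (y : V1) (z : V0), adjoint_graph ip0 ip1 domG G y z ->
           domD y /\ D y = - z)
  (a : {linear V1 -> V1}) (m : {linear V0 -> V0})
  (abdd : bounded ip1 a) (mbdd : bounded ip0 m)
  (acoer : coercive ip1 a) (mcoer : coercive ip0 m)
  (q0 : V1)
  (* q0 \in BD(D): q0 \in dom D, orthogonal in the graph inner product of D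
     to dom Dring = dom adjoint(G) *)
  (hq0dom : domD q0)
  (hq0BD : forall r : V1, dom_adjoint ip0 ip1 domG G r ->
             ip1 q0 r + ip0 (D q0) (D r) = 0) :
  exists! u : V0,
    (domG u /\ domD (a (G u))) /\
    m u - D (a (G u)) = 0 /\
    dom_adjoint ip0 ip1 domG G (a (G u) - q0).
Proof.
have H0 := H0hilb.1; have H1 := H1hilb.1.
have HP := ipP_inner H0 H1.
have Hc := prod_complete H0 H1 H0hilb.2 H1hilb.2.
have dG0 : domG 0 by case: Glin.
have G0 : G 0 = 0.
  have [_ h] := Glin.2 1 0 0 dG0 dG0; move: h; rewrite scaler0 addr0 scale1r => h.
  by apply: (addrI (G 0)); rewrite addr0 -h.
pose SG := fun p : (V0 * V1)%type => domG p.1 /\ p.2 = G p.1.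
have HS : subspace SG.
  split; first by split => //=; rewrite G0.
  move=> c x y [dx ex] [dy ey].
  have [d e] := Glin.2 c x.1 y.1 dx dy.
  by split => //=; rewrite e ex ey.
have HSc : closedS (ipP ip0 ip1) SG.
  move=> u l hu hl.
  have h1 : hcvg ip0 (fun n => (u n).1) l.1.
    move=> e e0; have [N hN] := hl e e0; exists N => n hn.
    exact: le_lt_trans (nmP1 H0 H1 (u n - l)) (hN n hn).
  have h2 : hcvg ip1 (G \o (fun n => (u n).1)) l.2.
    move=> e e0; have [N hN] := hl e e0; exists N => n hn.
    have := le_lt_trans (nmP2 H0 H1 (u n - l)) (hN n hn).
    by rewrite /= (proj2 (hu n)).
  have [dl el] := Gclosed _ _ _ (fun n => proj1 (hu n)) h1 h2.
  by split.
pose B := fun p q : (V0 * V1)%type => ip0 (m p.1) q.1 + ip1 (a p.2) q.2.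
have HB1 : forall u, SG u -> antilin SG (B u).
  move=> u _ c x y _ _; rewrite /B /= (ipDr H0) (ipZr H0) (ipDr H1) (ipZr H1); ring.
have HB2 : forall v c x y, SG v -> SG x -> SG y -> B (c *: x + y) v = c * B x v + B y v.
  move=> v c x y _ _ _; rewrite /B /= !linearP (ipL H0) (ipL H1); ring.
case: mbdd => cm hcm; case: abdd => ca hca.
have HBb : forall u v, SG u -> SG v ->
    complex.Re (B u v) <= (`|cm| + `|ca|) * hnorm (ipP ip0 ip1) u * hnorm (ipP ip0 ip1) v.
  move=> u v _ _; rewrite /B ReD -/(rp _ _ _) -/(rp _ _ _).
  have b1 : rp ip0 (m u.1) v.1 <= `|cm| * (hnorm (ipP ip0 ip1) u * hnorm (ipP ip0 ip1) v).
    eapply bnd; [exact: (CS H0 _ _)| | exact: nmP1 | exact: nmP1 | exact: nm_ge0 | exact: nm_ge0 | exact: normr_ge0].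
    apply: (le_trans (hcm _)); apply: ler_wpM2r; [exact: nm_ge0 | exact: ler_norm].
  have b2 : rp ip1 (a u.2) v.2 <= `|ca| * (hnorm (ipP ip0 ip1) u * hnorm (ipP ip0 ip1) v).
    eapply bnd; [exact: (CS H1 _ _)| | exact: nmP2 | exact: nmP2 | exact: nm_ge0 | exact: nm_ge0 | exact: normr_ge0].
    apply: (le_trans (hca _)); apply: ler_wpM2r; [exact: nm_ge0 | exact: ler_norm].
  rewrite -mulrA mulrDl; lra.
case: mcoer => mum [mum0 hm]; case: acoer => mua [mua0 ha].
have [al [al0 [alm ala]]] : exists al : R, 0 < al /\ al <= mum /\ al <= mua.
  by case: (leP mum mua) => h; [exists mum | exists mua; split => //; split => //; apply: ltW].
have Hco : forall u, SG u -> al * n2 (ipP ip0 ip1) u <= complex.Re (B u u).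
  move=> u _; rewrite n2P /B ReD.
  have := hm u.1; have := ha u.2; rewrite (nm_sq H0) (nm_sq H1) => k1 k2.
  have := n2_ge0 H0 u.1; have := n2_ge0 H1 u.2 => p1 p2.
  have k3 : al * n2 ip0 u.1 <= mum * n2 ip0 u.1 by apply: ler_wpM2r.
  have k4 : al * n2 ip1 u.2 <= mua * n2 ip1 u.2 by apply: ler_wpM2r.
  rewrite /n2 in k1 k2 k3 k4 p1 p2 *; lra.
pose f := fun q : (V0 * V1)%type => ip0 (D q0) q.1 + ip1 q0 q.2.
have Hf : antilin SG f.
  move=> c x y _ _; rewrite /f /= (ipDr H0) (ipZr H0) (ipDr H1) (ipZr H1); ring.
have HfK : forall v, SG v -> complex.Re (f v) <=
    (hnorm ip0 (D q0) + hnorm ip1 q0) * hnorm (ipP ip0 ip1) v.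
  move=> v _; rewrite /f ReD -/(rp _ _ _) -/(rp _ _ _) mulrDl.
  apply: lerD.
    apply: (le_trans (CS H0 _ _)); apply: ler_wpM2l; [exact: nm_ge0 | exact: nmP1].
  apply: (le_trans (CS H1 _ _)); apply: ler_wpM2l; [exact: nm_ge0 | exact: nmP2].
have [p [[dp ep] hp]] := lax_milgram HP SG B f _ _ _ HS HSc Hc HB1 HB2 HBb al0 Hco Hf HfK.
set u := p.1 in dp ep.
have hadj : adjoint_graph ip0 ip1 domG G (a (G u) - q0) (D q0 - m u).
  move=> x dx; have := hp (x, G x) (conj dx erefl).
  rewrite /B /f /= ep -/u => h.
  rewrite (ipC H1) (ipC H0) (ipBl H1) (ipBl H0); congr (_^*).
  exact: eqlem h.
have [hd hD] := hGD _ _ hadj.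
have solchar : forall w z, domG w -> domD (a (G w)) -> m w - D (a (G w)) = 0 ->
    adjoint_graph ip0 ip1 domG G (a (G w) - q0) z ->
    forall x, domG x -> ip1 (G x) (a (G w) - q0) = ip0 x (D q0 - m w).
  move=> w z dw dd e hz x dx; rewrite hz //; congr (ip0 x _).
  have [_ hD'] := hGD _ _ hz.
  have [_ hL] := Dlin.2 (-1) q0 (a (G w)) hq0dom dd.
  have hL' : D (a (G w) - q0) = D (a (G w)) - D q0.
    by move: hL; rewrite !scaleN1r (addrC (- q0)) (addrC (- D q0)).
  move/eqP: e; rewrite subr_eq0 => /eqP e.
  have -> : z = - D (a (G w) - q0) by rewrite hD' opprK.
  by rewrite hL' -e opprB.
have [dd de] : domD (a (G u)) /\ D (a (G u)) = D (a (G u) - q0) + D q0.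
  have [dd de] := Dlin.2 1 (a (G u) - q0) q0 hd hq0dom.
  by move: dd de; rewrite !scale1r subrK.
have eu : m u - D (a (G u)) = 0 by rewrite de hD opprB subrK subrr.
exists u; split.
  split; first by split.
  by split; last exists (D q0 - m u).
move=> u' [[dgu' dda'] [eq' [z hz]]].
have [dz Gz] := Glin.2 (-1) u u' dp dgu'.
move: dz Gz; rewrite !scaleN1r (addrC (- u)) (addrC (- G u)) => dz Gz.
have h1 := solchar u _ dp dd eu hadj _ dz.
have h2 := solchar u' _ dgu' dda' eq' hz _ dz.
set w := u' - u in dz Gz h1 h2 *.
have key : ip1 (G w) (a (G w)) = - ip0 w (m w).
  have e3 : a (G w) = (a (G u') - q0) - (a (G u) - q0) by rewrite Gz linearB subsub2.
  have e4 : m w = - ((D q0 - m u') - (D q0 - m u)) by rewrite /w linearB subsub opprB.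
  by rewrite e3 (ipBr H1) h2 h1 e4 (ipNr H0) opprK [RHS](ipBr H0).
have k1 := hm w; have k2 := ha (G w).
rewrite (nm_sq H0) (nm_sq H1) in k1 k2.
have k3 : rp ip1 (a (G w)) (G w) = - rp ip0 (m w) w.
  by rewrite (rpC H1) /rp key ReN -/(rp _ _ _) (rpC H0).
have p1 := n2_ge0 H1 (G w).
have k4 : mum * n2 ip0 w <= 0.
  move: k1 k2 k3 p1; rewrite /n2 /rp => k1 k2 k3 p1.
  have : 0 <= mua * complex.Re (ip1 (G w) (G w)) by rewrite mulr_ge0 // ltW.
  lra.
have w0 : w = 0.
  apply: (n2_eq0 H0); apply/eqP; rewrite eq_le n2_ge0 // andbT.
  by rewrite -(@pmulr_rle0 _ mum).
by apply/esym/subr0_eq.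
Qed.
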